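(* Every real binary quartic form $p\in F_{2,4}$ has a unique signature, i.e. $\mathcal B(p)$ has exactly one minimal element with respect to $\preceq$.
   Context: $F_{2,4}$ is the space of real binary forms of degree $4$ in $x,y$. A representation of $p\in F_{2,4}$ is an expression $p=\sum_{j=1}^r\lambda_j(\alpha_jx+\beta_jy)^{4}$ with $r\ge0$ (empty sum $=0$), $\alpha_j,\beta_j\in\mathbb R$, $0\ne\lambda_j\in\mathbb R$; it is honest if the linear forms $\alpha_jx+\beta_jy$ are pairwise non-proportional. Its badge is $(a,b)$ where $a=\#\{j:\lambda_j>0\}$, $b=\#\{j:\lambda_j<0\}$. $\mathcal B(p)$ is the set of badges of honest representations of $p$. Badges are ordered by $(a,b)\preceq(c,d)$ iff $a\le c$ and $b\le d$; a signature of $p$ is a minimal element of $\mathcal B(p)$. *)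

(* Defs.v *)
From Stdlib Require Import Reals List.
Import ListNotations.
Open Scope R_scope.

Record F24 : Type := mkF24 { c0 : R; c1 : R; c2 : R; c3 : R; c4 : R }.

Definition F24_eval (p : F24) (x y : R) : R :=
  c0 p * x ^ 4 + c1 p * x ^ 3 * y + c2 p * x ^ 2 * y ^ 2
  + c3 p * x * y ^ 3 + c4 p * y ^ 4.

(* A term of a representation: (lambda, alpha, beta), standing for
   lambda * (alpha x + beta y)^4. *)
Definition term : Type := (R * R * R)%type.
Definition t_lam (t : term) : R := fst (fst t).
Definition t_alpha (t : term) : R := snd (fst t).
Definition t_beta (t : term) : R := snd t.

Definition rep_eval (l : list term) (x y : R) : R :=
  fold_right (fun t acc => t_lam t * (t_alpha t * x + t_beta t * y) ^ 4 + acc) 0 l.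

(* l is a representation of p: all lambda_j nonzero and p = sum_j lambda_j (alpha_j x + beta_j y)^4
   (as forms, equivalently as polynomial functions on R^2). *)
Definition is_rep (p : F24) (l : list term) : Prop :=
  (forall t, In t l -> t_lam t <> 0) /\
  (forall x y, F24_eval p x y = rep_eval l x y).

Definition honest (l : list term) : Prop :=
  forall i j : nat, (i < j)%nat -> (j < length l)%nat ->
    let ti := nth i l (0, 0, 0) in
    let tj := nth j l (0, 0, 0) in
    t_alpha ti * t_beta tj - t_alpha tj * t_beta ti <> 0.

Definition is_honest_rep (p : F24) (l : list term) : Prop :=
  is_rep p l /\ honest l.

Definition posb (r : R) : bool := if Rlt_dec 0 r then true else false.
Definition negb_ (r : R) : bool := if Rlt_dec r 0 then true else false.

Definition badge (l : list term) : nat * nat :=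
  (length (filter (fun t => posb (t_lam t)) l),
   length (filter (fun t => negb_ (t_lam t)) l)).

Definition in_B (p : F24) (s : nat * nat) : Prop :=
  exists l, is_honest_rep p l /\ badge l = s.

Definition badge_le (s t : nat * nat) : Prop :=
  (fst s <= fst t)%nat /\ (snd s <= snd t)%nat.

Definition is_signature (p : F24) (s : nat * nat) : Prop :=
  in_B p s /\ (forall s', in_B p s' -> badge_le s' s -> s' = s).

(* Main.v *)
Require Import Defs.
From Stdlib Require Import Reals List Lra Lia Psatz Classical Arith.
Import ListNotations.
Open Scope R_scope.

Record Mo := mkMo { h0 : R; h1 : R; h2 : R; h3 : R; h4 : R }.

Lemma Mo_ext : forall a b : Mo, h0 a = h0 b -> h1 a = h1 b -> h2 a = h2 b ->
  h3 a = h3 b -> h4 a = h4 b -> a = b.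
Proof. intros [] []; simpl; intros; subst; reflexivity. Qed.

Definition madd (a b : Mo) : Mo :=
  mkMo (h0 a + h0 b) (h1 a + h1 b) (h2 a + h2 b) (h3 a + h3 b) (h4 a + h4 b).
Definition mscale (c : R) (a : Mo) : Mo :=
  mkMo (c * h0 a) (c * h1 a) (c * h2 a) (c * h3 a) (c * h4 a).
Definition mzero : Mo := mkMo 0 0 0 0 0.
Definition F4m (a b : R) : Mo := mkMo (a^4) (a^3*b) (a^2*b^2) (a*b^3) (b^4).
Definition tF (t : term) : Mo := F4m (t_alpha t) (t_beta t).

Definition momL (l : list term) : Mo :=
  fold_right (fun t acc => madd (mscale (t_lam t) (tF t)) acc) mzero l.

Definition hom (p : F24) : Mo := mkMo (Defs.c0 p) (Defs.c1 p / 4) (Defs.c2 p / 6) (Defs.c3 p / 4) (Defs.c4 p).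

Definition evM (h : Mo) (x y : R) : R :=
  h0 h * x^4 + 4 * h1 h * x^3 * y + 6 * h2 h * x^2 * y^2 + 4 * h3 h * x * y^3 + h4 h * y^4.

Lemma rep_eval_evM : forall l x y, rep_eval l x y = evM (momL l) x y.
Proof.
  induction l as [|t l IH]; intros x y; simpl.
  - unfold evM; simpl; ring.
  - rewrite IH. unfold evM, madd, mscale, tF, F4m; simpl. ring.
Qed.

Lemma F24_evM : forall p x y, F24_eval p x y = evM (hom p) x y.
Proof. intros p x y; unfold F24_eval, evM, hom; simpl; field. Qed.

Lemma evM_inj : forall a b, (forall x y, evM a x y = evM b x y) -> a = b.
Proof.
  intros a b H.
  pose proof (H 1 0) as E1. pose proof (H 0 1) as E2. pose proof (H 1 1) as E3.
  pose proof (H 1 (-1)) as E4. pose proof (H 1 2) as E5.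
  unfold evM in *. apply Mo_ext; nra.
Qed.

Lemma is_rep_iff : forall p l, is_rep p l <->
  ((forall t, In t l -> t_lam t <> 0) /\ hom p = momL l).
Proof.
  intros p l; unfold is_rep; split; intros [H1 H2]; split; auto.
  - apply evM_inj; intros x y. rewrite <- F24_evM, <- rep_eval_evM. auto.
  - intros x y. rewrite F24_evM, rep_eval_evM, H2. reflexivity.
Qed.

Definition Dt (t u : term) : R := t_alpha t * t_beta u - t_alpha u * t_beta t.

Fixpoint hon (l : list term) : Prop :=
  match l with
  | [] => True
  | t :: r => (forall u, In u r -> Dt t u <> 0) /\ hon r
  end.

Lemma honest_hon : forall l, honest l <-> hon l.
Proof.
  induction l as [|t l IH]; unfold honest in *; simpl.
  - split; intros; auto. lia.
  - split.
    + intros H. split.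
      * intros u Hu. destruct (In_nth l u (0,0,0) Hu) as [j [Hj Hn]].
        specialize (H 0%nat (S j)). simpl in H. rewrite Hn in H. apply H; lia.
      * apply IH. intros i j Hij Hj. specialize (H (S i) (S j)). simpl in H. apply H; lia.
    + intros [H1 H2] i j Hij Hj. destruct j as [|j]; [lia|].
      destruct i as [|i].
      * simpl. apply H1. apply nth_In. simpl in Hj; lia.
      * simpl. apply IH; auto; simpl in Hj; lia.
Qed.

Definition posf (t : term) : bool := posb (t_lam t).
Definition negf (t : term) : bool := negb_ (t_lam t).
Definition cntpos (l : list term) : nat := length (filter posf l).
Definition cntneg (l : list term) : nat := length (filter negf l).

Lemma posb_true : forall r, posb r = true <-> 0 < r.
Proof. intros r; unfold posb; destruct (Rlt_dec 0 r); split; intros; auto; try discriminate; lra. Qed.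
Lemma negb_true : forall r, negb_ r = true <-> r < 0.
Proof. intros r; unfold negb_; destruct (Rlt_dec r 0); split; intros; auto; try discriminate; lra. Qed.

Lemma badge_eq : forall l, badge l = (cntpos l, cntneg l).
Proof. reflexivity. Qed.

Lemma hon_filter : forall f l, hon l -> hon (filter f l).
Proof.
  intros f; induction l as [|t l IH]; simpl; auto.
  intros [H1 H2]. destruct (f t); simpl; auto.
  split; auto. intros u Hu. apply filter_In in Hu. apply H1; tauto.
Qed.

Lemma Dt_anti : forall t u, Dt t u = - Dt u t.
Proof. intros; unfold Dt; ring. Qed.

Lemma hon_In : forall l t u, hon l -> In t l -> In u l -> t <> u -> Dt t u <> 0.
Proof.
  induction l as [|a l IH]; simpl; [tauto|].
  intros t u [H1 H2] [->|Ht] [->|Hu] Hne; auto.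
  - rewrite Dt_anti. intro E. apply (H1 t Ht). lra.
Qed.

Lemma len_split : forall l, (forall t, In t l -> t_lam t <> 0) ->
  (cntpos l + cntneg l = length l)%nat.
Proof.
  unfold cntpos, cntneg; induction l as [|t l IH]; simpl; intros H; auto.
  assert (Ht : t_lam t <> 0) by auto.
  assert (IH' := IH (fun u Hu => H u (or_intror Hu))).
  unfold posf at 1, negf at 1, posb, negb_.
  destruct (Rlt_dec 0 (t_lam t)); destruct (Rlt_dec (t_lam t) 0); simpl; try lra; lia.
Qed.

Lemma mom_cons : forall t l, momL (t :: l) = madd (mscale (t_lam t) (tF t)) (momL l).
Proof. reflexivity. Qed.

Lemma mom_split : forall l, momL l = madd (momL (filter posf l)) (momL (filter negf l)).
Proof.
  induction l as [|t l IH]; simpl.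
  - apply Mo_ext; simpl; ring.
  - rewrite IH. destruct (posf t) eqn:Ep; destruct (negf t) eqn:En; unfold posf, negf in *.
    + apply posb_true in Ep; apply negb_true in En; lra.
    + apply Mo_ext; simpl; ring.
    + apply Mo_ext; simpl; ring.
    + assert (E : t_lam t = 0).
      { destruct (Rlt_dec 0 (t_lam t)) as [a|a]; [apply posb_true in a; congruence|].
        destruct (Rlt_dec (t_lam t) 0) as [b|b]; [apply negb_true in b; congruence|]. lra. }
      rewrite E. apply Mo_ext; simpl; ring.
Qed.

Definition tneg (t : term) : term := (- t_lam t, t_alpha t, t_beta t).
Definition negL (l : list term) : list term := map tneg l.

Lemma mom_neg : forall l, momL (negL l) = mscale (-1) (momL l).
Proof.
  induction l as [|t l IH]; simpl.
  - apply Mo_ext; simpl; ring.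
  - rewrite IH. apply Mo_ext; unfold tneg, tF, t_lam, t_alpha, t_beta; simpl; ring.
Qed.

Lemma hon_neg : forall l, hon l -> hon (negL l).
Proof.
  induction l as [|t l IH]; simpl; auto. intros [H1 H2]; split; auto.
  intros u Hu. apply in_map_iff in Hu. destruct Hu as [v [<- Hv]].
  unfold Dt, tneg, t_alpha, t_beta in *; simpl. apply (H1 v Hv).
Qed.

Lemma cnt_neg1 : forall l, cntpos (negL l) = cntneg l.
Proof.
  unfold cntpos, cntneg; induction l as [|t l IH]; simpl; auto.
  unfold posf at 1, negf at 1, posb, negb_, tneg, t_lam; simpl.
  destruct (Rlt_dec 0 (- fst (fst t))); destruct (Rlt_dec (fst (fst t)) 0); simpl; try lra; lia.
Qed.
Lemma cnt_neg2 : forall l, cntneg (negL l) = cntpos l.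
Proof.
  unfold cntpos, cntneg; induction l as [|t l IH]; simpl; auto.
  unfold posf at 1, negf at 1, posb, negb_, tneg, t_lam; simpl.
  destruct (Rlt_dec (- fst (fst t)) 0); destruct (Rlt_dec 0 (fst (fst t))); simpl; try lra; lia.
Qed.

Lemma lam_neg : forall l, (forall t, In t l -> t_lam t <> 0) -> (forall t, In t (negL l) -> t_lam t <> 0).
Proof.
  intros l H t Ht. apply in_map_iff in Ht. destruct Ht as [v [<- Hv]].
  unfold tneg, t_lam; simpl. specialize (H v Hv). unfold t_lam in H. lra.
Qed.

Lemma len_neg : forall l, length (negL l) = length l.
Proof. intros; apply length_map. Qed.

Definition REP (h : Mo) (l : list term) : Prop :=
  (forall t, In t l -> t_lam t <> 0) /\ momL l = h.
Definition nzp (t : term) : Prop := ~ (t_alpha t = 0 /\ t_beta t = 0).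
Definition GOOD (h : Mo) (l : list term) : Prop :=
  REP h l /\ hon l /\ (length l <= 3)%nat /\ (forall t, In t l -> nzp t).

Definition fzf (t : term) : bool := if Req_EM_T (t_lam t) 0 then false else true.
Definition fpf (t : term) : bool :=
  if Req_EM_T (t_alpha t) 0 then (if Req_EM_T (t_beta t) 0 then false else true) else true.

Lemma mom_fz : forall l, momL (filter fzf l) = momL l.
Proof.
  induction l as [|t l IH]; simpl; auto. unfold fzf at 1.
  destruct (Req_EM_T (t_lam t) 0) as [E|E]; simpl; rewrite IH; auto.
  rewrite E. apply Mo_ext; simpl; ring.
Qed.

Lemma mom_fp : forall l, momL (filter fpf l) = momL l.
Proof.
  induction l as [|t l IH]; simpl; auto. unfold fpf at 1.
  destruct (Req_EM_T (t_alpha t) 0) as [E|E]; [destruct (Req_EM_T (t_beta t) 0) as [E'|E']|];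
    simpl; rewrite IH; auto.
  unfold tF. rewrite E, E'. apply Mo_ext; simpl; ring.
Qed.

Lemma LEN3 : forall h l, momL l = h -> hon l -> (length l <= 3)%nat -> exists l', GOOD h l'.
Proof.
  intros h l Hm Hh Hl. exists (filter fpf (filter fzf l)). repeat split.
  - intros t Ht. apply filter_In in Ht. destruct Ht as [Ht _]. apply filter_In in Ht.
    destruct Ht as [_ Ht]. unfold fzf in Ht. destruct (Req_EM_T (t_lam t) 0); congruence.
  - rewrite mom_fp, mom_fz; auto.
  - apply hon_filter, hon_filter; auto.
  - pose proof (filter_length_le fpf (filter fzf l)). pose proof (filter_length_le fzf l). lia.
  - intros t Ht. apply filter_In in Ht. destruct Ht as [_ Ht]. unfold fpf in Ht. intros [E1 E2].
    destruct (Req_EM_T (t_alpha t) 0); [destruct (Req_EM_T (t_beta t) 0)|]; congruence.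
Qed.

Record V3 := mkV { v0 : R; v1 : R; v2 : R }.
Definition ev (u : V3) (a b : R) : R := v0 u * a^2 + v1 u * a * b + v2 u * b^2.
Definition evt (u : V3) (t : term) : R := ev u (t_alpha t) (t_beta t).
Definition Hb (h : Mo) (u w : V3) : R :=
  v0 u * v0 w * h0 h + (v0 u * v1 w + v1 u * v0 w) * h1 h
  + (v0 u * v2 w + v1 u * v1 w + v2 u * v0 w) * h2 h
  + (v1 u * v2 w + v2 u * v1 w) * h3 h + v2 u * v2 w * h4 h.
Definition SL (l : list term) (u w : V3) : R :=
  fold_right (fun t acc => t_lam t * evt u t * evt w t + acc) 0 l.

Lemma Hb_F4 : forall a b u w, Hb (F4m a b) u w = ev u a b * ev w a b.
Proof. intros; unfold Hb, F4m, ev; simpl; ring. Qed.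

Lemma Hb_mom : forall l u w, Hb (momL l) u w = SL l u w.
Proof.
  induction l as [|t l IH]; intros u w; simpl.
  - unfold Hb; simpl; ring.
  - rewrite <- IH. unfold Hb, madd, mscale, tF, F4m, evt, ev; simpl; ring.
Qed.

Lemma SL_nonpos : forall l u, (forall t, In t l -> 0 < t_lam t -> evt u t = 0) -> SL l u u <= 0.
Proof.
  induction l as [|t l IH]; intros u H; simpl; [lra|].
  assert (IH' := IH u (fun v Hv => H v (or_intror Hv))).
  destruct (Rlt_dec 0 (t_lam t)) as [P|P].
  - rewrite (H t (or_introl eq_refl) P). lra.
  - assert (0 <= evt u t * evt u t) by nra. nra.
Qed.

Lemma SL_nonneg : forall l u, (forall t, In t l -> t_lam t < 0 -> evt u t = 0) -> 0 <= SL l u u.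
Proof.
  induction l as [|t l IH]; intros u H; simpl; [lra|].
  assert (IH' := IH u (fun v Hv => H v (or_intror Hv))).
  destruct (Rlt_dec (t_lam t) 0) as [P|P].
  - rewrite (H t (or_introl eq_refl) P). lra.
  - assert (0 <= evt u t * evt u t) by nra. nra.
Qed.

Lemma SL_pos : forall l u, (forall t, In t l -> t_lam t < 0 -> evt u t = 0) ->
  (exists t, In t l /\ 0 < t_lam t /\ evt u t <> 0) -> 0 < SL l u u.
Proof.
  induction l as [|t l IH]; intros u H [y [Hy [Hp Hn]]]; simpl; [destruct Hy|].
  destruct Hy as [<-|Hy].
  - assert (0 <= SL l u u) by (apply SL_nonneg; intros v Hv; apply H; simpl; auto).
    assert (0 < evt u t * evt u t).
    { assert (evt u t * evt u t <> 0) by (apply Rmult_integral_contrapositive; tauto). nra. }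
    nra.
  - assert (0 < SL l u u).
    { apply IH. intros v Hv; apply H; simpl; auto. exists y; auto. }
    destruct (Rlt_dec (t_lam t) 0) as [P|P].
    + rewrite (H t (or_introl eq_refl) P). lra.
    + assert (0 <= evt u t * evt u t) by nra. nra.
Qed.

Definition zeroP (t : term) : Prop := t_alpha t = 0 /\ t_beta t = 0.

Lemma prop3 : forall z y y', ~ zeroP z -> Dt z y = 0 -> Dt z y' = 0 -> Dt y y' = 0.
Proof.
  intros z y y' Hz H1 H2. unfold Dt, zeroP in *.
  assert (E1 : (t_alpha y * t_beta y' - t_alpha y' * t_beta y) * t_alpha z = 0).
  { replace ((t_alpha y * t_beta y' - t_alpha y' * t_beta y) * t_alpha z) with
      (t_alpha y * (t_alpha z * t_beta y' - t_alpha y' * t_beta z) - t_alpha y' * (t_alpha z * t_beta y - t_alpha y * t_beta z)) by ring.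
    rewrite H1, H2. ring. }
  assert (E2 : (t_alpha y * t_beta y' - t_alpha y' * t_beta y) * t_beta z = 0).
  { replace ((t_alpha y * t_beta y' - t_alpha y' * t_beta y) * t_beta z) with
      (t_beta y * (t_alpha z * t_beta y' - t_alpha y' * t_beta z) - t_beta y' * (t_alpha z * t_beta y - t_alpha y * t_beta z)) by ring.
    rewrite H1, H2. ring. }
  destruct (Req_dec (t_alpha z) 0) as [A|A].
  - destruct (Req_dec (t_beta z) 0) as [B|B]; [tauto|].
    apply Rmult_integral in E2; destruct E2; [auto|contradiction].
  - apply Rmult_integral in E1; destruct E1; [auto|contradiction].
Qed.

Definition ndf (z : term) (y : term) : bool := if Req_EM_T (Dt z y) 0 then false else true.

Lemma filter_len : forall z Y, hon Y -> ~ zeroP z -> (length Y <= S (length (filter (ndf z) Y)))%nat.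
Proof.
  intros z; induction Y as [|y Y IH]; simpl; intros HY Hz; [lia|].
  destruct HY as [H1 H2]. unfold ndf at 1. destruct (Req_EM_T (Dt z y) 0) as [E|E].
  - assert (filter (ndf z) Y = Y).
    { apply forallb_filter_id. apply forallb_forall. intros y' Hy'. unfold ndf.
      destruct (Req_EM_T (Dt z y') 0) as [E'|E']; auto.
      exfalso. apply (H1 y' Hy'). eapply prop3; eauto. }
    rewrite H. lia.
  - simpl. specialize (IH H2 Hz). lia.
Qed.

Lemma pig : forall Z Y, hon Y -> (length Z < length Y)%nat ->
  exists y, In y Y /\ forall z, In z Z -> zeroP z \/ Dt z y <> 0.
Proof.
  induction Z as [|z Z IH]; intros Y HY HL.
  - destruct Y as [|y Y]; simpl in HL; [lia|]. exists y; split; simpl; auto.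
  - simpl in HL.
    destruct (classic (zeroP z)) as [Hz|Hz].
    + destruct (IH Y HY) as [y [Hy Hy2]]; [lia|]. exists y; split; auto.
      intros z' [E|Hz']; [rewrite <- E; auto|auto].
    + pose proof (filter_len z Y HY Hz).
      destruct (IH (filter (ndf z) Y)) as [y [Hy Hy2]].
      * apply hon_filter; auto.
      * lia.
      * apply filter_In in Hy. destruct Hy as [Hy Hy3]. exists y; split; auto.
        intros z' [E|Hz']; [|auto]. subst z'. right. unfold ndf in Hy3.
        destruct (Req_EM_T (Dt z y) 0); congruence.
Qed.

Definition mulL (p1 q1 p2 q2 : R) : V3 := mkV (p1*p2) (p1*q2 + q1*p2) (q1*q2).
Lemma ev_mulL : forall p1 q1 p2 q2 a b,
  ev (mulL p1 q1 p2 q2) a b = (p1*a + q1*b) * (p2*a + q2*b).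
Proof. intros; unfold ev, mulL; simpl; ring. Qed.

Lemma lf_ex : forall z y, nzp y -> (zeroP z \/ Dt z y <> 0) ->
  exists p q, p * t_alpha y + q * t_beta y <> 0 /\ (~ zeroP z -> p * t_alpha z + q * t_beta z = 0).
Proof.
  intros z y Hy [Hz|Hz].
  - exists (t_alpha y), (t_beta y). split; [|tauto].
    unfold nzp in Hy. intro E. apply Hy. split; nra.
  - exists (- t_beta z), (t_alpha z). split.
    + unfold Dt in Hz. intro E. apply Hz. lra.
    + intros _. ring.
Qed.

Lemma ev_zero : forall u z, zeroP z -> evt u z = 0.
Proof. intros u z [A B]. unfold evt, ev. rewrite A, B. ring. Qed.

Lemma pad_nz : forall y, nzp y -> t_alpha y * t_alpha y + t_beta y * t_beta y <> 0.
Proof. intros y Hy E. apply Hy. split; nra. Qed.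

Lemma build : forall Z y, (length Z <= 2)%nat -> nzp y ->
  (forall z, In z Z -> zeroP z \/ Dt z y <> 0) ->
  exists u, (forall z, In z Z -> evt u z = 0) /\ evt u y <> 0.
Proof.
  intros Z y HL Hy HZ. pose proof (pad_nz y Hy) as Pd.
  destruct Z as [|z1 [|z2 [|z3 Z]]]; simpl in HL; try lia.
  - exists (mulL (t_alpha y) (t_beta y) (t_alpha y) (t_beta y)). split.
    + intros z [].
    + unfold evt. rewrite ev_mulL. apply Rmult_integral_contrapositive; tauto.
  - destruct (lf_ex z1 y Hy (HZ z1 (or_introl eq_refl))) as [p1 [q1 [N1 Z1]]].
    exists (mulL p1 q1 (t_alpha y) (t_beta y)). split.
    + intros z [<-|[]]. destruct (classic (zeroP z1)) as [Hz|Hz].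
      * apply ev_zero; auto.
      * unfold evt; rewrite ev_mulL, (Z1 Hz). ring.
    + unfold evt. rewrite ev_mulL. apply Rmult_integral_contrapositive; tauto.
  - destruct (lf_ex z1 y Hy (HZ z1 (or_introl eq_refl))) as [p1 [q1 [N1 Z1]]].
    destruct (lf_ex z2 y Hy (HZ z2 (or_intror (or_introl eq_refl)))) as [p2 [q2 [N2 Z2]]].
    exists (mulL p1 q1 p2 q2). split.
    + intros z [<-|[<-|[]]].
      * destruct (classic (zeroP z1)) as [Hz|Hz]; [apply ev_zero; auto|].
        unfold evt; rewrite ev_mulL, (Z1 Hz). ring.
      * destruct (classic (zeroP z2)) as [Hz|Hz]; [apply ev_zero; auto|].
        unfold evt; rewrite ev_mulL, (Z2 Hz). ring.
    + unfold evt. rewrite ev_mulL. apply Rmult_integral_contrapositive; tauto.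
Qed.

Lemma In_filter_pos : forall t l, In t (filter posf l) <-> In t l /\ 0 < t_lam t.
Proof. intros; rewrite filter_In; unfold posf; rewrite posb_true; tauto. Qed.
Lemma In_filter_neg : forall t l, In t (filter negf l) <-> In t l /\ t_lam t < 0.
Proof. intros; rewrite filter_In; unfold negf; rewrite negb_true; tauto. Qed.

Lemma C1pos : forall h R0 R, GOOD h R0 -> REP h R -> (cntpos R0 <= cntpos R)%nat.
Proof.
  intros h R0 R [[L0 M0] [H0 [Len0 N0]]] [L M].
  destruct (le_lt_dec (cntpos R0) (cntpos R)) as [ok|lt]; auto. exfalso.
  unfold cntpos in lt.
  destruct (pig (filter posf R) (filter posf R0)) as [y [Hy Hy2]]; auto.
  { apply hon_filter; auto. }
  apply In_filter_pos in Hy. destruct Hy as [Hy Hyp].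
  assert (LS := len_split R0 L0). unfold cntpos, cntneg in LS.
  destruct (build (filter posf R ++ filter negf R0) y) as [u [Hu1 Hu2]].
  - rewrite length_app. lia.
  - apply N0; auto.
  - intros z Hz. apply in_app_or in Hz. destruct Hz as [Hz|Hz]; auto.
    right. apply In_filter_neg in Hz. destruct Hz as [Hz Hzn].
    apply (hon_In R0); auto. intros ->. lra.
  - assert (E : SL R0 u u = SL R u u) by (rewrite <- !Hb_mom, M0, M; reflexivity).
    assert (A : SL R u u <= 0).
    { apply SL_nonpos. intros t Ht Hp. apply Hu1. apply in_or_app. left.
      apply In_filter_pos; auto. }
    assert (B : 0 < SL R0 u u).
    { apply SL_pos.
      - intros t Ht Hn. apply Hu1. apply in_or_app. right. apply In_filter_neg; auto.
      - exists y; auto. }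
    lra.
Qed.

Lemma GOOD_neg : forall h l, GOOD h l -> GOOD (mscale (-1) h) (negL l).
Proof.
  intros h l [[L M] [H [Len N]]]. split; [split|split; [|split]].
  - apply lam_neg; auto.
  - rewrite mom_neg, M; auto.
  - apply hon_neg; auto.
  - rewrite len_neg; auto.
  - intros t Ht. apply in_map_iff in Ht. destruct Ht as [v [<- Hv]]. unfold nzp, tneg, t_alpha, t_beta in *; simpl. apply (N v Hv).
Qed.

Lemma REP_neg : forall h l, REP h l -> REP (mscale (-1) h) (negL l).
Proof. intros h l [L M]. split; [apply lam_neg; auto| rewrite mom_neg, M; auto]. Qed.

Lemma C1neg : forall h R0 R, GOOD h R0 -> REP h R -> (cntneg R0 <= cntneg R)%nat.
Proof.
  intros h R0 R G Rp. rewrite <- !cnt_neg1.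
  eapply C1pos; [apply GOOD_neg; eauto | apply REP_neg; eauto].
Qed.

Definition A00 h := h2 h * h4 h - h3 h ^ 2.
Definition A01 h := h2 h * h3 h - h1 h * h4 h.
Definition A02 h := h1 h * h3 h - h2 h ^ 2.
Definition A11 h := h0 h * h4 h - h2 h ^ 2.
Definition A12 h := h1 h * h2 h - h0 h * h3 h.
Definition A22 h := h0 h * h2 h - h1 h ^ 2.
Definition detH h := h0 h * A00 h + h1 h * A01 h + h2 h * A02 h.
Definition gvec h a b : V3 :=
  mkV (A00 h * a^2 + A01 h * (a*b) + A02 h * b^2)
      (A01 h * a^2 + A11 h * (a*b) + A12 h * b^2)
      (A02 h * a^2 + A12 h * (a*b) + A22 h * b^2).
Definition kap h a b := ev (gvec h a b) a b.
Definition bet h p q a b := kap (madd (F4m p q) h) a b - kap h a b.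
Definition dd (a b c d : R) := a * d - c * b.

Lemma Hv_g0 : forall h a b, h0 h * v0 (gvec h a b) + h1 h * v1 (gvec h a b) + h2 h * v2 (gvec h a b) = detH h * a^2.
Proof. intros; unfold gvec, detH, A00, A01, A02, A11, A12, A22; simpl; ring. Qed.
Lemma Hv_g1 : forall h a b, h1 h * v0 (gvec h a b) + h2 h * v1 (gvec h a b) + h3 h * v2 (gvec h a b) = detH h * (a*b).
Proof. intros; unfold gvec, detH, A00, A01, A02, A11, A12, A22; simpl; ring. Qed.
Lemma Hv_g2 : forall h a b, h2 h * v0 (gvec h a b) + h3 h * v1 (gvec h a b) + h4 h * v2 (gvec h a b) = detH h * b^2.
Proof. intros; unfold gvec, detH, A00, A01, A02, A11, A12, A22; simpl; ring. Qed.

Lemma det_upd : forall h mu p q, detH (madd (mscale mu (F4m p q)) h) = detH h + mu * kap h p q.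
Proof. intros; unfold kap, ev, gvec, detH, A00, A01, A02, A11, A12, A22, madd, mscale, F4m; simpl; ring. Qed.

Lemma kap_upd : forall h mu p q a b, kap (madd (mscale mu (F4m p q)) h) a b = kap h a b + mu * bet h p q a b.
Proof. intros; unfold bet, kap, ev, gvec, detH, A00, A01, A02, A11, A12, A22, madd, mscale, F4m; simpl; ring. Qed.

Lemma bet_upd : forall h mu p' q' p q a b, bet (madd (mscale mu (F4m p' q')) h) p q a b
  = bet h p q a b + mu * (dd a b p' q' * dd a b p q * dd p' q' p q)^2.
Proof. intros; unfold dd, bet, kap, ev, gvec, detH, A00, A01, A02, A11, A12, A22, madd, mscale, F4m; simpl; ring. Qed.

Definition nmom (N : list term) : Mo :=
  fold_right (fun t acc => madd (mscale (- t_lam t) (tF t)) acc) mzero N.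

Lemma nmom_eq : forall N, nmom N = mscale (-1) (momL N).
Proof.
  induction N as [|t N IH]; simpl; [apply Mo_ext; simpl; ring|].
  rewrite IH. apply Mo_ext; simpl; ring.
Qed.

Definition allneg (N : list term) := forall t, In t N -> t_lam t < 0.

Lemma allneg_tl : forall t N, allneg (t :: N) -> allneg N.
Proof. intros t N H u Hu; apply H; simpl; auto. Qed.

Lemma bet_nn : forall N p q a b, allneg N -> 0 <= bet (nmom N) p q a b.
Proof.
  induction N as [|t N IH]; intros p q a b H; simpl.
  - unfold bet, kap, ev, gvec, A00, A01, A02, A11, A12, A22, madd, F4m, mzero; simpl. nra.
  - unfold tF. rewrite bet_upd.
    assert (0 <= bet (nmom N) p q a b) by (apply IH; eapply allneg_tl; eauto).
    assert (t_lam t < 0) by (apply H; simpl; auto).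
    assert (0 <= (dd a b (t_alpha t) (t_beta t) * dd a b p q * dd (t_alpha t) (t_beta t) p q) ^ 2) by (apply pow2_ge_0).
    nra.
Qed.

Lemma kap_nn : forall N a b, allneg N -> 0 <= kap (nmom N) a b.
Proof.
  induction N as [|t N IH]; intros a b H; simpl.
  - unfold kap, ev, gvec, A00, A01, A02, A11, A12, A22, mzero; simpl. lra.
  - unfold tF. rewrite kap_upd.
    assert (0 <= kap (nmom N) a b) by (apply IH; eapply allneg_tl; eauto).
    assert (0 <= bet (nmom N) (t_alpha t) (t_beta t) a b) by (apply bet_nn; eapply allneg_tl; eauto).
    assert (t_lam t < 0) by (apply H; simpl; auto).
    nra.
Qed.

Lemma det_nn : forall N, allneg N -> 0 <= detH (nmom N).
Proof.
  induction N as [|t N IH]; intros H; simpl.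
  - unfold detH, A00, A01, A02, mzero; simpl. lra.
  - unfold tF. rewrite det_upd.
    assert (0 <= detH (nmom N)) by (apply IH; eapply allneg_tl; eauto).
    assert (0 <= kap (nmom N) (t_alpha t) (t_beta t)) by (apply kap_nn; eapply allneg_tl; eauto).
    assert (t_lam t < 0) by (apply H; simpl; auto).
    nra.
Qed.

Lemma kap_pos : forall t1 t2 N a b, allneg (t1 :: t2 :: N) ->
  dd a b (t_alpha t1) (t_beta t1) <> 0 -> dd a b (t_alpha t2) (t_beta t2) <> 0 ->
  Dt t2 t1 <> 0 -> 0 < kap (nmom (t1 :: t2 :: N)) a b.
Proof.
  intros t1 t2 N a b H D1 D2 D12.
  change (nmom (t1 :: t2 :: N)) with (madd (mscale (- t_lam t1) (tF t1)) (nmom (t2 :: N))).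
  unfold tF at 1. rewrite kap_upd.
  assert (HK : 0 <= kap (nmom (t2 :: N)) a b) by (apply kap_nn; eapply allneg_tl; eauto).
  set (V := dd a b (t_alpha t2) (t_beta t2) * dd a b (t_alpha t1) (t_beta t1) * dd (t_alpha t2) (t_beta t2) (t_alpha t1) (t_beta t1)).
  assert (HB : bet (nmom (t2 :: N)) (t_alpha t1) (t_beta t1) a b = bet (nmom N) (t_alpha t1) (t_beta t1) a b + (- t_lam t2) * V ^ 2).
  { change (nmom (t2 :: N)) with (madd (mscale (- t_lam t2) (tF t2)) (nmom N)).
    unfold tF at 1. rewrite bet_upd. reflexivity. }
  rewrite HB.
  assert (0 <= bet (nmom N) (t_alpha t1) (t_beta t1) a b)
    by (apply bet_nn; do 2 eapply allneg_tl; eauto).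
  assert (t_lam t1 < 0) by (apply H; simpl; auto).
  assert (t_lam t2 < 0) by (apply H; simpl; auto).
  assert (X : V <> 0).
  { unfold V. unfold Dt in D12. unfold dd at 3. repeat apply Rmult_integral_contrapositive; split; auto. }
  assert (0 < V ^ 2).
  { simpl. rewrite Rmult_1_r. assert (forall x, x <> 0 -> 0 < x * x) as Q by (intros; nra). apply Q; auto. }
  assert (0 < (- t_lam t1) * ((- t_lam t2) * V^2)) by (apply Rmult_lt_0_compat; [lra|apply Rmult_lt_0_compat; lra]).
  assert (0 <= (- t_lam t1) * bet (nmom N) (t_alpha t1) (t_beta t1) a b) by (apply Rmult_le_pos; lra).
  nra.
Qed.

Lemma dd_Dt : forall t u, dd (t_alpha t) (t_beta t) (t_alpha u) (t_beta u) = Dt t u.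
Proof. reflexivity. Qed.

Lemma det_pos : forall t1 t2 t3 N, allneg (t1 :: t2 :: t3 :: N) ->
  Dt t1 t2 <> 0 -> Dt t1 t3 <> 0 -> Dt t3 t2 <> 0 -> 0 < detH (nmom (t1 :: t2 :: t3 :: N)).
Proof.
  intros t1 t2 t3 N H D12 D13 D32.
  change (nmom (t1 :: t2 :: t3 :: N)) with (madd (mscale (- t_lam t1) (tF t1)) (nmom (t2 :: t3 :: N))).
  unfold tF at 1. rewrite det_upd.
  assert (0 <= detH (nmom (t2 :: t3 :: N))) by (apply det_nn; eapply allneg_tl; eauto).
  assert (0 < kap (nmom (t2 :: t3 :: N)) (t_alpha t1) (t_beta t1)).
  { apply kap_pos; auto. eapply allneg_tl; eauto. }
  assert (t_lam t1 < 0) by (apply H; simpl; auto).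
  assert (0 < (- t_lam t1) * kap (nmom (t2 :: t3 :: N)) (t_alpha t1) (t_beta t1)) by (apply Rmult_lt_0_compat; lra).
  lra.
Qed.

Definition discr (g : V3) := v1 g ^ 2 - 4 * v0 g * v2 g.

Lemma psd_of_disc : forall g ma mb, 0 < ev g ma mb -> discr g <= 0 -> forall a b, 0 <= ev g a b.
Proof.
  intros g ma mb Hm Hd a b. unfold ev, discr in *.
  destruct (Rtotal_order (v0 g) 0) as [N|[Z|P]].
  - exfalso.
    assert (4 * v0 g * (v0 g * ma^2 + v1 g * ma * mb + v2 g * mb^2) = (2 * v0 g * ma + v1 g * mb)^2 + (4 * v0 g * v2 g - v1 g ^2) * mb^2) by ring.
    assert (0 <= (2 * v0 g * ma + v1 g * mb)^2) by apply pow2_ge_0.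
    assert (0 <= (4 * v0 g * v2 g - v1 g ^2) * mb^2) by (apply Rmult_le_pos; [lra| apply pow2_ge_0]).
    nra.
  - rewrite Z in *. assert (v1 g = 0) by nra. rewrite H in *.
    assert (0 < v2 g) by (assert (0 <= mb^2) by apply pow2_ge_0; nra).
    assert (0 <= b^2) by apply pow2_ge_0. nra.
  - assert (4 * v0 g * (v0 g * a^2 + v1 g * a * b + v2 g * b^2) = (2 * v0 g * a + v1 g * b)^2 + (4 * v0 g * v2 g - v1 g ^2) * b^2) by ring.
    assert (0 <= (2 * v0 g * a + v1 g * b)^2) by apply pow2_ge_0.
    assert (0 <= (4 * v0 g * v2 g - v1 g ^2) * b^2) by (apply Rmult_le_pos; [lra| apply pow2_ge_0]).
    nra.
Qed.

Lemma factor : forall g, 0 < discr g -> exists k a1 b1 a2 b2, k <> 0 /\ dd a1 b1 a2 b2 <> 0 /\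
  v0 g = k * (b1 * b2) /\ v1 g = k * (- (a1 * b2 + a2 * b1)) /\ v2 g = k * (a1 * a2).
Proof.
  intros g Hd. unfold discr in Hd.
  destruct (Req_dec (v0 g) 0) as [Z|Z].
  - exists 1, 1, 0, (v2 g), (- v1 g). rewrite Z in Hd.
    assert (v1 g <> 0) by (intro E; rewrite E in Hd; lra).
    unfold dd; split; [lra|split; [|split; [|split]]].
    + intro E. apply H. lra.
    + rewrite Z; ring.
    + ring.
    + ring.
  - set (s := sqrt (v1 g ^ 2 - 4 * v0 g * v2 g)).
    assert (Hs : s * s = v1 g ^ 2 - 4 * v0 g * v2 g) by (apply sqrt_sqrt; lra).
    assert (Hs0 : 0 < s) by (apply sqrt_lt_R0; lra).
    exists (v0 g), ((- v1 g + s) / (2 * v0 g)), 1, ((- v1 g - s) / (2 * v0 g)), 1.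
    unfold dd; split; [auto|split; [|split; [|split]]].
    + replace ((- v1 g + s) / (2 * v0 g) * 1 - (- v1 g - s) / (2 * v0 g) * 1) with (s / v0 g) by (field; auto).
      unfold Rdiv. apply Rmult_integral_contrapositive; split; [lra|apply Rinv_neq_0_compat; auto].
    + ring.
    + field; auto.
    + replace (v0 g * ((- v1 g + s) / (2 * v0 g) * ((- v1 g - s) / (2 * v0 g)))) with
        ((v1 g * v1 g - s * s) / (4 * v0 g)) by (field; auto).
      rewrite Hs. field; auto.
Qed.

Definition recE (h : Mo) a1 b1 a2 b2 : Prop :=
  b1*b2*h0 h - (a1*b2+a2*b1)*h1 h + a1*a2*h2 h = 0 /\
  b1*b2*h1 h - (a1*b2+a2*b1)*h2 h + a1*a2*h3 h = 0 /\
  b1*b2*h2 h - (a1*b2+a2*b1)*h3 h + a1*a2*h4 h = 0.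

Lemma step : forall A B C x0 x1 x2 u0 u1 u2 w0 w1 w2 c1 c2, A <> 0 ->
  C*x0 - B*x1 + A*x2 = 0 -> C*u0 - B*u1 + A*u2 = 0 -> C*w0 - B*w1 + A*w2 = 0 ->
  x0 = c1*u0 + c2*w0 -> x1 = c1*u1 + c2*w1 -> x2 = c1*u2 + c2*w2.
Proof.
  intros A B C x0 x1 x2 u0 u1 u2 w0 w1 w2 c1 c2 HA E1 E2 E3 X0 X1.
  apply (Rmult_eq_reg_l A); auto.
  replace (A * (c1*u2 + c2*w2)) with (c1*(A*u2) + c2*(A*w2)) by ring.
  replace (A*u2) with (B*u1 - C*u0) by lra.
  replace (A*w2) with (B*w1 - C*w0) by lra.
  replace (A*x2) with (B*x1 - C*x0) by lra.
  rewrite X0, X1. ring.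
Qed.

Lemma twoA : forall h a1 b1 a2 b2, dd a1 b1 a2 b2 <> 0 -> a1 * a2 <> 0 -> recE h a1 b1 a2 b2 ->
  exists c1 c2, h = madd (mscale c1 (F4m a1 b1)) (mscale c2 (F4m a2 b2)).
Proof.
  intros h a1 b1 a2 b2 D A [E0 [E1 E2]].
  assert (Ha1 : a1 <> 0) by (intro Z; apply A; rewrite Z; ring).
  assert (Ha2 : a2 <> 0) by (intro Z; apply A; rewrite Z; ring).
  set (del := a1^4 * (a2^3*b2) - (a1^3*b1) * a2^4).
  assert (Hd : del <> 0).
  { unfold del. replace (a1^4 * (a2^3*b2) - (a1^3*b1) * a2^4) with (a1^3 * a2^3 * dd a1 b1 a2 b2) by (unfold dd; ring).
    apply Rmult_integral_contrapositive; split; [apply Rmult_integral_contrapositive; split; apply pow_nonzero; auto | auto]. }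
  exists ((h0 h * (a2^3*b2) - h1 h * a2^4) / del), ((a1^4 * h1 h - a1^3*b1 * h0 h) / del).
  set (c1 := (h0 h * (a2^3*b2) - h1 h * a2^4) / del).
  set (c2 := (a1^4 * h1 h - a1^3*b1 * h0 h) / del).
  assert (X0 : h0 h = c1 * a1^4 + c2 * a2^4) by (unfold c1, c2, del in *; field; auto).
  assert (X1 : h1 h = c1 * (a1^3*b1) + c2 * (a2^3*b2)) by (unfold c1, c2, del in *; field; auto).
  assert (X2 : h2 h = c1 * (a1^2*b1^2) + c2 * (a2^2*b2^2)).
  { eapply (step (a1*a2) (a1*b2+a2*b1) (b1*b2)); eauto; ring. }
  assert (X3 : h3 h = c1 * (a1*b1^3) + c2 * (a2*b2^3)).
  { eapply (step (a1*a2) (a1*b2+a2*b1) (b1*b2) (h1 h) (h2 h)); eauto; ring. }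
  assert (X4 : h4 h = c1 * (b1^4) + c2 * (b2^4)).
  { eapply (step (a1*a2) (a1*b2+a2*b1) (b1*b2) (h2 h) (h3 h)); eauto; ring. }
  apply Mo_ext; simpl; auto.
Qed.

Definition rev (h : Mo) : Mo := mkMo (h4 h) (h3 h) (h2 h) (h1 h) (h0 h).

Lemma two_term : forall h a1 b1 a2 b2, dd a1 b1 a2 b2 <> 0 -> recE h a1 b1 a2 b2 ->
  exists c1 c2, h = madd (mscale c1 (F4m a1 b1)) (mscale c2 (F4m a2 b2)).
Proof.
  intros h a1 b1 a2 b2 D E.
  destruct (Req_dec (a1 * a2) 0) as [A|A]; [|apply twoA; auto].
  destruct (Req_dec (b1 * b2) 0) as [B|B].
  - destruct E as [E0 [E1 E2]]. unfold dd in D.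
    assert (G : a1 * b2 + a2 * b1 <> 0).
    { intro G. apply D.
      assert (P : (a2 * b1) * (a2 * b1) = 0).
      { replace ((a2 * b1) * (a2 * b1)) with (- ((a1*a2)*(b1*b2)) + (a2*b1) * (a1 * b2 + a2 * b1)) by ring.
        rewrite A, G. ring. }
      apply Rmult_integral in P. assert (a2 * b1 = 0) by tauto. lra. }
    assert (Y1 : h1 h = 0) by (rewrite A, B in E0; apply (Rmult_eq_reg_l (a1 * b2 + a2 * b1)); auto; lra).
    assert (Y2 : h2 h = 0) by (rewrite A, B in E1; apply (Rmult_eq_reg_l (a1 * b2 + a2 * b1)); auto; lra).
    assert (Y3 : h3 h = 0) by (rewrite A, B in E2; apply (Rmult_eq_reg_l (a1 * b2 + a2 * b1)); auto; lra).
    destruct (Req_dec a1 0) as [Z1|Z1].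
    + assert (b1 <> 0) by (intro W; apply D; rewrite Z1, W; ring).
      assert (b2 = 0) by (apply Rmult_integral in B; tauto).
      assert (a2 <> 0) by (intro W; apply D; rewrite Z1, H0, W; ring).
      exists (h4 h / b1^4), (h0 h / a2^4).
      apply Mo_ext; simpl; rewrite ?Z1, ?H0, ?Y1, ?Y2, ?Y3; field; auto.
    + assert (a2 = 0) by (apply Rmult_integral in A; tauto).
      assert (b1 = 0) by (apply Rmult_integral in B; destruct B as [B|B]; auto;
                          exfalso; apply D; rewrite H, B; ring).
      assert (b2 <> 0) by (intro W; apply D; rewrite H, H0, W; ring).
      exists (h0 h / a1^4), (h4 h / b2^4).
      apply Mo_ext; simpl; rewrite ?H, ?H0, ?Y1, ?Y2, ?Y3; field; auto.
  - destruct E as [E0 [E1 E2]].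
    destruct (twoA (rev h) b1 a1 b2 a2) as [c1 [c2 Hc]].
    + unfold dd in *. intro W; apply D; lra.
    + auto.
    + unfold rev, recE; simpl. repeat split; lra.
    + exists c1, c2. apply Mo_ext.
      * assert (X := f_equal h4 Hc). unfold rev, madd, mscale, F4m in X; simpl in *. rewrite X. ring.
      * assert (X := f_equal h3 Hc). unfold rev, madd, mscale, F4m in X; simpl in *. rewrite X. ring.
      * assert (X := f_equal h2 Hc). unfold rev, madd, mscale, F4m in X; simpl in *. rewrite X. ring.
      * assert (X := f_equal h1 Hc). unfold rev, madd, mscale, F4m in X; simpl in *. rewrite X. ring.
      * assert (X := f_equal h0 Hc). unfold rev, madd, mscale, F4m in X; simpl in *. rewrite X. ring.
Qed.

Lemma Hb_add : forall a b u w, Hb (madd a b) u w = Hb a u w + Hb b u w.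
Proof. intros; unfold Hb, madd; simpl; ring. Qed.
Lemma Hb_scale : forall c a u w, Hb (mscale c a) u w = c * Hb a u w.
Proof. intros; unfold Hb, mscale; simpl; ring. Qed.

Lemma Hb_g : forall h u a b, Hb h u (gvec h a b) = detH h * ev u a b.
Proof.
  intros. unfold Hb, ev.
  replace (v0 u * v0 (gvec h a b) * h0 h + (v0 u * v1 (gvec h a b) + v1 u * v0 (gvec h a b)) * h1 h +
   (v0 u * v2 (gvec h a b) + v1 u * v1 (gvec h a b) + v2 u * v0 (gvec h a b)) * h2 h +
   (v1 u * v2 (gvec h a b) + v2 u * v1 (gvec h a b)) * h3 h + v2 u * v2 (gvec h a b) * h4 h)
  with (v0 u * (h0 h * v0 (gvec h a b) + h1 h * v1 (gvec h a b) + h2 h * v2 (gvec h a b))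
       + v1 u * (h1 h * v0 (gvec h a b) + h2 h * v1 (gvec h a b) + h3 h * v2 (gvec h a b))
       + v2 u * (h2 h * v0 (gvec h a b) + h3 h * v1 (gvec h a b) + h4 h * v2 (gvec h a b))) by ring.
  rewrite Hv_g0, Hv_g1, Hv_g2. ring.
Qed.

Lemma SL_zero : forall N psi g, allneg N -> (forall t, In t N -> 0 <= evt g t) ->
  (forall t, In t N -> 0 < evt psi t) ->
  SL N psi g <= 0 /\ (SL N psi g = 0 -> SL N g g = 0).
Proof.
  induction N as [|t N IH]; intros psi g H1 H2 H3; simpl; [lra|].
  destruct (IH psi g) as [A B].
  - eapply allneg_tl; eauto.
  - intros; apply H2; simpl; auto.
  - intros; apply H3; simpl; auto.
  - assert (L : t_lam t < 0) by (apply H1; simpl; auto).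
    assert (G : 0 <= evt g t) by (apply H2; simpl; auto).
    assert (P : 0 < evt psi t) by (apply H3; simpl; auto).
    assert (T : t_lam t * evt psi t * evt g t <= 0).
    { assert (0 <= evt psi t * evt g t) by (apply Rmult_le_pos; lra).
      replace (t_lam t * evt psi t * evt g t) with (t_lam t * (evt psi t * evt g t)) by ring. nra. }
    split; [lra|]. intros E.
    assert (E1 : t_lam t * evt psi t * evt g t = 0) by lra.
    assert (E2 : SL N psi g = 0) by lra.
    assert (Z : evt g t = 0).
    { apply Rmult_integral in E1. destruct E1 as [E1|E1]; auto.
      apply Rmult_integral in E1. lra. }
    rewrite Z, (B E2). ring.
Qed.

Lemma ev_factor : forall g k a1 b1 a2 b2,
  v0 g = k * (b1 * b2) -> v1 g = k * (- (a1 * b2 + a2 * b1)) -> v2 g = k * (a1 * a2) ->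
  forall a b, ev g a b = k * dd a1 b1 a b * dd a2 b2 a b.
Proof. intros g k a1 b1 a2 b2 E0 E1 E2 a b. unfold ev, dd. rewrite E0, E1, E2. ring. Qed.

Lemma Hb_F4u : forall a b u, Hb (F4m a b) u u = ev u a b ^ 2.
Proof. intros; rewrite Hb_F4; ring. Qed.

Lemma nz_sq : forall x, x <> 0 -> 0 < x ^ 2.
Proof. intros x H. simpl. rewrite Rmult_1_r. nra. Qed.

Lemma Core : forall (M : term) (N : list term) (l0 : R) h,
  h = madd (mscale l0 (tF M)) (momL N) -> hon N -> allneg N -> (3 <= length N)%nat ->
  (forall t, In t N -> Dt M t <> 0) ->
  exists c c1 c2 a1 b1 a2 b2,
    h = madd (mscale c (tF M)) (madd (mscale c1 (F4m a1 b1)) (mscale c2 (F4m a2 b2))) /\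
    dd a1 b1 a2 b2 <> 0 /\ dd (t_alpha M) (t_beta M) a1 b1 <> 0 /\
    dd (t_alpha M) (t_beta M) a2 b2 <> 0 /\ c1 <= 0 /\ c2 <= 0.
Proof.
  intros M N l0 h Hh HN Hneg HL HM.
  set (ma := t_alpha M). set (mb := t_beta M).
  set (n := nmom N).
  assert (Hn : momL N = mscale (-1) n) by (unfold n; rewrite nmom_eq; apply Mo_ext; simpl; ring).
  destruct N as [|t1 [|t2 [|t3 r]]]; simpl in HL; try lia.
  assert (D12 : Dt t1 t2 <> 0) by (apply (proj1 HN); simpl; auto).
  assert (D13 : Dt t1 t3 <> 0) by (apply (proj1 HN); simpl; auto).
  assert (D23 : Dt t2 t3 <> 0) by (apply (proj1 (proj2 HN)); simpl; auto).
  assert (HD : 0 < detH n).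
  { apply det_pos; auto. rewrite Dt_anti. intro E; apply D23; lra. }
  assert (HK : 0 < kap n ma mb).
  { apply kap_pos; auto.
    - apply (HM t1); simpl; auto.
    - apply (HM t2); simpl; auto.
    - rewrite Dt_anti. intro E; apply D12; lra. }
  set (N := t1 :: t2 :: t3 :: r) in *.
  set (D := detH n) in *. set (K := kap n ma mb) in *.
  set (g := gvec n ma mb).
  set (s := D / K).
  set (q := madd (mscale s (tF M)) (momL N)).
  assert (Hhq : h = madd (mscale (l0 - s) (tF M)) q).
  { rewrite Hh. unfold q. apply Mo_ext; simpl; ring. }
  assert (evgM : ev g ma mb = K) by reflexivity.
  assert (F1 : forall u, Hb q u g = 0).
  { intros u. unfold q. rewrite Hb_add, Hb_scale, Hn, Hb_scale. unfold g. rewrite Hb_g.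
    unfold tF. rewrite Hb_F4. fold ma mb. fold g. rewrite evgM. fold D. unfold s. field.
    lra. }
  assert (F2 : 0 < discr g).
  { destruct (Rlt_le_dec 0 (discr g)) as [ok|Hd]; auto. exfalso.
    assert (Pg : forall a b, 0 <= ev g a b) by (intros a b; apply (psd_of_disc g ma mb); lra).
    set (psi := mkV (mb^2) (-2 * ma * mb) (ma^2)).
    assert (Epsi : forall a b, ev psi a b = dd ma mb a b ^ 2) by (intros; unfold ev, psi, dd; simpl; ring).
    destruct (SL_zero N psi g Hneg) as [_ Z].
    - intros; apply Pg.
    - intros t Ht. unfold evt. rewrite Epsi. apply nz_sq. apply (HM t Ht).
    - assert (E1 : Hb n psi g = 0).
      { unfold g. rewrite Hb_g. rewrite Epsi. unfold dd. ring. }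
      assert (E2 : Hb n psi g = - SL N psi g).
      { unfold n. rewrite nmom_eq, Hb_scale, Hb_mom. ring. }
      assert (E3 : SL N g g = 0) by (apply Z; lra).
      assert (E4 : Hb n g g = - SL N g g).
      { unfold n. rewrite nmom_eq, Hb_scale, Hb_mom. ring. }
      assert (E5 : Hb n g g = D * K) by (unfold g at 2; rewrite Hb_g; reflexivity).
      assert (0 < D * K) by (apply Rmult_lt_0_compat; lra).
      lra. }
  destruct (factor g F2) as [k [a1 [b1 [a2 [b2 [Hk [Hd [G0 [G1 G2]]]]]]]]].
  assert (EG := ev_factor g k a1 b1 a2 b2 G0 G1 G2).
  assert (F4 : recE q a1 b1 a2 b2).
  { assert (X0 := F1 (mkV 1 0 0)). assert (X1 := F1 (mkV 0 1 0)). assert (X2 := F1 (mkV 0 0 1)).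
    unfold Hb in X0, X1, X2; cbn [v0 v1 v2] in X0, X1, X2. rewrite G0, G1, G2 in X0, X1, X2.
    unfold recE. repeat split; apply (Rmult_eq_reg_l k); auto; rewrite Rmult_0_r; lra. }
  destruct (two_term q a1 b1 a2 b2 Hd F4) as [c1 [c2 Hq]].
  assert (KM : K = k * dd a1 b1 ma mb * dd a2 b2 ma mb) by (rewrite <- evgM; apply EG).
  assert (M1 : dd a1 b1 ma mb <> 0) by (intro E; rewrite E in KM; lra).
  assert (M2 : dd a2 b2 ma mb <> 0) by (intro E; rewrite E in KM; lra).
  assert (SLn : forall u, SL N u u <= 0).
  { intros u. apply SL_nonpos. intros t Ht P. assert (t_lam t < 0) by (apply Hneg; auto). lra. }
  assert (Hqd : forall u, Hb q u u = s * ev u ma mb ^ 2 + SL N u u).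
  { intros u. unfold q. rewrite Hb_add, Hb_scale, Hb_mom. unfold tF. rewrite Hb_F4u. reflexivity. }
  assert (Hqr : forall u, Hb q u u = c1 * ev u a1 b1 ^ 2 + c2 * ev u a2 b2 ^ 2).
  { intros u. rewrite Hq, Hb_add, !Hb_scale, !Hb_F4u. reflexivity. }
  exists (l0 - s), c1, c2, a1, b1, a2, b2. split; [rewrite Hhq, Hq; reflexivity|].
  split; [auto|]. split; [unfold dd in *; intro E; apply M1; lra|].
  split; [unfold dd in *; intro E; apply M2; lra|].
  split.
  - set (u := mulL (- b2) a2 (- mb) ma).
    assert (Eu : forall a b, ev u a b = dd a2 b2 a b * dd ma mb a b) by (intros; unfold u; rewrite ev_mulL; unfold dd; ring).
    assert (A1 : ev u ma mb = 0) by (rewrite Eu; unfold dd; ring).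
    assert (A2 : ev u a2 b2 = 0) by (rewrite Eu; unfold dd; ring).
    assert (A3 : ev u a1 b1 <> 0).
    { rewrite Eu. apply Rmult_integral_contrapositive; split; unfold dd in *; intro E; [apply Hd|apply M1]; lra. }
    assert (B := Hqd u). rewrite Hqr, A1, A2 in B. specialize (SLn u).
    assert (P := nz_sq _ A3).
    destruct (Rle_lt_dec c1 0) as [ok|bad]; auto.
    assert (0 < c1 * ev u a1 b1 ^ 2) by (apply Rmult_lt_0_compat; auto). nra.
  - set (u := mulL (- b1) a1 (- mb) ma).
    assert (Eu : forall a b, ev u a b = dd a1 b1 a b * dd ma mb a b) by (intros; unfold u; rewrite ev_mulL; unfold dd; ring).
    assert (A1 : ev u ma mb = 0) by (rewrite Eu; unfold dd; ring).
    assert (A2 : ev u a1 b1 = 0) by (rewrite Eu; unfold dd; ring).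
    assert (A3 : ev u a2 b2 <> 0).
    { rewrite Eu. apply Rmult_integral_contrapositive; split; unfold dd in *; intro E; [apply Hd|apply M2]; lra. }
    assert (B := Hqd u). rewrite Hqr, A1, A2 in B. specialize (SLn u).
    assert (P := nz_sq _ A3).
    destruct (Rle_lt_dec c2 0) as [ok|bad]; auto.
    assert (0 < c2 * ev u a2 b2 ^ 2) by (apply Rmult_lt_0_compat; auto). nra.
Qed.

Lemma core_good : forall (M : term) (N : list term) (l0 : R) h,
  h = madd (mscale l0 (tF M)) (momL N) -> hon N -> allneg N -> (3 <= length N)%nat ->
  (forall t, In t N -> Dt M t <> 0) -> exists R0, GOOD h R0.
Proof.
  intros M N l0 h Hh HN Hneg HL HM.
  destruct (Core M N l0 h Hh HN Hneg HL HM) as [c [c1 [c2 [a1 [b1 [a2 [b2 [E [D12 [D1 [D2 _]]]]]]]]]]].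
  apply (LEN3 h [(c, t_alpha M, t_beta M); (c1, a1, b1); (c2, a2, b2)]).
  - rewrite E. apply Mo_ext; simpl; unfold tF, t_lam, t_alpha, t_beta; simpl; ring.
  - simpl. unfold Dt, t_alpha, t_beta; simpl. unfold dd in *.
    repeat split; auto; intros u Hu; repeat destruct Hu as [<-|Hu]; simpl; auto; try contradiction.
  - simpl; lia.
Qed.

Lemma allneg_filter : forall l, allneg (filter negf l).
Proof. intros l t Ht. apply In_filter_neg in Ht. tauto. Qed.

Lemma C3 : forall h l, REP h l -> hon l -> (cntpos l <= 1)%nat -> exists R0, GOOD h R0.
Proof.
  intros h l [L M] H Cp.
  destruct (le_lt_dec (length l) 3) as [Le|Gt]; [apply (LEN3 h l); auto|].
  assert (LS := len_split l L).
  assert (Hs := mom_split l). rewrite M in Hs.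
  unfold cntpos, cntneg in *.
  assert (HN : hon (filter negf l)) by (apply hon_filter; auto).
  destruct (filter posf l) as [|tp [|tq P]] eqn:EP; simpl in Cp; try lia.
  - destruct (filter negf l) as [|t1 N] eqn:EN; simpl in LS; [lia|].
    apply (core_good t1 N (t_lam t1)).
    + rewrite Hs. apply Mo_ext; simpl; ring.
    + destruct HN; auto.
    + intros t Ht. apply (allneg_filter l). rewrite EN; simpl; auto.
    + lia.
    + destruct HN; auto.
  - apply (core_good tp (filter negf l) (t_lam tp)).
    + rewrite Hs. apply Mo_ext; simpl; ring.
    + auto.
    + apply allneg_filter.
    + simpl in LS. lia.
    + intros t Ht. assert (Hp : In tp (filter posf l)) by (rewrite EP; simpl; auto).
      apply In_filter_pos in Hp. apply In_filter_neg in Ht.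
      apply (hon_In l); try tauto. intros ->. lra.
Qed.

Lemma mm_neg : forall h, mscale (-1) (mscale (-1) h) = h.
Proof. intros; apply Mo_ext; simpl; ring. Qed.

Lemma C3n : forall h l, REP h l -> hon l -> (cntneg l <= 1)%nat -> exists R0, GOOD h R0.
Proof.
  intros h l Hr H Cn.
  destruct (C3 (mscale (-1) h) (negL l)) as [R0 G].
  - apply REP_neg; auto.
  - apply hon_neg; auto.
  - rewrite cnt_neg1; auto.
  - exists (negL R0). rewrite <- (mm_neg h). apply GOOD_neg; auto.
Qed.

Definition TT (h : Mo) : Prop := (exists R0, GOOD h R0) \/
  (exists l, REP h l /\ hon l /\ cntpos l = 2%nat /\ cntneg l = 2%nat).

Lemma FIN4 : forall h l, REP h l -> hon l -> (length l <= 4)%nat -> TT h.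
Proof.
  intros h l Hr H Len. unfold TT.
  destruct (le_lt_dec (length l) 3) as [Le|Gt]; [left; apply (LEN3 h l); destruct Hr; auto|].
  assert (LS := len_split l (proj1 Hr)).
  destruct (le_lt_dec (cntpos l) 1); [left; apply (C3 h l); auto|].
  destruct (le_lt_dec (cntneg l) 1); [left; apply (C3n h l); auto|].
  right. exists l. repeat split; try apply Hr; auto; lia.
Qed.

Lemma fz_REP : forall h l, momL l = h -> REP h (filter fzf l).
Proof.
  intros h l M. split.
  - intros t Ht. apply filter_In in Ht. destruct Ht as [_ Ht]. unfold fzf in Ht.
    destruct (Req_EM_T (t_lam t) 0); congruence.
  - rewrite mom_fz; auto.
Qed.

Lemma FIN4z : forall h l, momL l = h -> hon l -> (length l <= 4)%nat -> TT h.
Proof.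
  intros h l M H Len. apply (FIN4 h (filter fzf l)).
  - apply fz_REP; auto.
  - apply hon_filter; auto.
  - pose proof (filter_length_le fzf l). lia.
Qed.

Lemma prop_ex : forall a b c d, dd a b c d = 0 -> dd c d a b <> 0 \/ (c <> 0 \/ d <> 0) ->
  (c <> 0 \/ d <> 0) -> exists r, a = r * c /\ b = r * d.
Proof.
  intros a b c d E _ [C|C]; unfold dd in E.
  - exists (a / c). split; [field; auto|]. apply (Rmult_eq_reg_l c); auto. field_simplify; auto. lra.
  - exists (b / d). split; [|field; auto]. apply (Rmult_eq_reg_l d); auto. field_simplify; auto. lra.
Qed.

Lemma nz_of_dd1 : forall a b c d, dd a b c d <> 0 -> a <> 0 \/ b <> 0.
Proof. intros a b c d H. unfold dd in H. destruct (Req_dec a 0); [right|left; auto]. intro E. apply H. subst; ring. Qed.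
Lemma nz_of_dd2 : forall a b c d, dd a b c d <> 0 -> c <> 0 \/ d <> 0.
Proof. intros a b c d H. unfold dd in H. destruct (Req_dec c 0); [right|left; auto]. intro E. apply H. subst; ring. Qed.

Lemma R23 : forall h l, REP h l -> hon l -> cntpos l = 2%nat -> cntneg l = 3%nat -> TT h.
Proof.
  intros h l [L M] H Cp Cn.
  assert (Hs := mom_split l). rewrite M in Hs.
  unfold cntpos, cntneg in *.
  assert (HP : hon (filter posf l)) by (apply hon_filter; auto).
  destruct (filter posf l) as [|t1 [|t2 [|t3 P]]] eqn:EP; simpl in Cp; try lia.
  assert (P1 : 0 < t_lam t1) by (assert (Hp : In t1 (filter posf l)) by (rewrite EP; simpl; auto); apply In_filter_pos in Hp; tauto).
  assert (P2 : 0 < t_lam t2) by (assert (Hp : In t2 (filter posf l)) by (rewrite EP; simpl; auto); apply In_filter_pos in Hp; tauto).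
  assert (D12 : Dt t1 t2 <> 0) by (apply (proj1 HP); simpl; auto).
  set (h' := madd (mscale (t_lam t2) (tF t2)) (momL (filter negf l))).
  assert (Hh : h = madd (mscale (t_lam t1) (tF t1)) h') by (rewrite Hs; unfold h'; apply Mo_ext; simpl; ring).
  destruct (Core t2 (filter negf l) (t_lam t2) h' eq_refl) as [c [c1 [c2 [a1 [b1 [a2 [b2 [E [DR [D1 [D2 [S1 S2]]]]]]]]]]]].
  - apply hon_filter; auto.
  - apply allneg_filter.
  - lia.
  - intros t Ht. assert (Hp : In t2 (filter posf l)) by (rewrite EP; simpl; auto).
    apply In_filter_pos in Hp. apply In_filter_neg in Ht.
    apply (hon_In l); try tauto. intros ->. lra.
  - rewrite E in Hh.
    destruct (Req_dec (dd (t_alpha t1) (t_beta t1) a1 b1) 0) as [Z1|Z1].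
    + destruct (prop_ex _ _ _ _ Z1 (or_intror (nz_of_dd1 _ _ _ _ DR)) (nz_of_dd1 _ _ _ _ DR)) as [r [Ea Eb]].
      left. apply (LEN3 h [(t_lam t1 * r^4 + c1, a1, b1); (c, t_alpha t2, t_beta t2); (c2, a2, b2)]).
      * rewrite Hh. unfold tF. rewrite Ea, Eb. apply Mo_ext; simpl; unfold t_lam, t_alpha, t_beta; simpl; ring.
      * simpl. repeat split; intros u Hu; repeat destruct Hu as [<-|Hu]; try contradiction;
             unfold Dt, t_alpha, t_beta; simpl; intro W;
             first [apply D1; unfold dd, t_alpha, t_beta in *; lra | apply DR; unfold dd, t_alpha, t_beta in *; lra | apply D2; unfold dd, t_alpha, t_beta in *; lra
                   | apply D12; unfold Dt, t_alpha, t_beta in *; lra | apply Z1; unfold dd, t_alpha, t_beta in *; lra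
                   | apply Z2; unfold dd, t_alpha, t_beta in *; lra].
      * simpl; lia.
    + destruct (Req_dec (dd (t_alpha t1) (t_beta t1) a2 b2) 0) as [Z2|Z2].
      * destruct (prop_ex _ _ _ _ Z2 (or_intror (nz_of_dd2 _ _ _ _ DR)) (nz_of_dd2 _ _ _ _ DR)) as [r [Ea Eb]].
        left. apply (LEN3 h [(t_lam t1 * r^4 + c2, a2, b2); (c, t_alpha t2, t_beta t2); (c1, a1, b1)]).
        -- rewrite Hh. unfold tF. rewrite Ea, Eb. apply Mo_ext; simpl; unfold t_lam, t_alpha, t_beta; simpl; ring.
        -- simpl. repeat split; intros u Hu; repeat destruct Hu as [<-|Hu]; try contradiction;
             unfold Dt, t_alpha, t_beta; simpl; intro W;
             first [apply D1; unfold dd, t_alpha, t_beta in *; lra | apply DR; unfold dd, t_alpha, t_beta in *; lra | apply D2; unfold dd, t_alpha, t_beta in *; lra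
                   | apply D12; unfold Dt, t_alpha, t_beta in *; lra | apply Z1; unfold dd, t_alpha, t_beta in *; lra
                   | apply Z2; unfold dd, t_alpha, t_beta in *; lra].
        -- simpl; lia.
      * apply (FIN4z h [t1; (c, t_alpha t2, t_beta t2); (c1, a1, b1); (c2, a2, b2)]).
        -- rewrite Hh. apply Mo_ext; simpl; unfold tF, t_lam, t_alpha, t_beta; simpl; ring.
        -- simpl. repeat split; intros u Hu; repeat destruct Hu as [<-|Hu]; try contradiction;
             unfold Dt, t_alpha, t_beta; simpl; intro W;
             first [apply D1; unfold dd, t_alpha, t_beta in *; lra | apply DR; unfold dd, t_alpha, t_beta in *; lra | apply D2; unfold dd, t_alpha, t_beta in *; lra
                   | apply D12; unfold Dt, t_alpha, t_beta in *; lra | apply Z1; unfold dd, t_alpha, t_beta in *; lra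
                   | apply Z2; unfold dd, t_alpha, t_beta in *; lra].
        -- simpl; lia.
Qed.

Lemma TT_neg : forall h, TT (mscale (-1) h) -> TT h.
Proof.
  intros h [[R0 G]|[l [Hr [H [Cp Cn]]]]].
  - left. exists (negL R0). rewrite <- (mm_neg h). apply GOOD_neg; auto.
  - right. exists (negL l). rewrite <- (mm_neg h).
    split; [apply REP_neg; auto|split; [apply hon_neg; auto|split]].
    + rewrite cnt_neg1; auto.
    + rewrite cnt_neg2; auto.
Qed.

Lemma R32 : forall h l, REP h l -> hon l -> cntpos l = 3%nat -> cntneg l = 2%nat -> TT h.
Proof.
  intros h l Hr H Cp Cn. apply TT_neg. apply (R23 _ (negL l)).
  - apply REP_neg; auto.
  - apply hon_neg; auto.
  - rewrite cnt_neg1; auto.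
  - rewrite cnt_neg2; auto.
Qed.

Lemma FIN5 : forall h l, REP h l -> hon l -> (length l <= 5)%nat -> TT h.
Proof.
  intros h l Hr H Len.
  destruct (le_lt_dec (length l) 4) as [Le|Gt]; [apply (FIN4 h l); auto|].
  assert (LS := len_split l (proj1 Hr)).
  destruct (le_lt_dec (cntpos l) 1); [left; apply (C3 h l); auto|].
  destruct (le_lt_dec (cntneg l) 1); [left; apply (C3n h l); auto|].
  destruct (Nat.eq_dec (cntpos l) 2).
  - apply (R23 h l); auto; lia.
  - apply (R32 h l); auto; lia.
Qed.

Lemma Main : forall h, TT h.
Proof.
  intros h.
  set (l5 := (h3 h - h1 h)/6).
  set (d := h1 h - 2 * l5). set (e := h2 h - 4 * l5).
  set (L := [(h0 h - e - l5, 1, 0); (h4 h - e - 16 * l5, 0, 1); ((d+e)/2, 1, 1); ((e-d)/2, 1, -1); (l5, 1, 2)]).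
  assert (M : momL L = h).
  { apply Mo_ext; unfold L, d, e, l5; simpl; unfold tF, t_lam, t_alpha, t_beta; simpl; field. }
  assert (H : hon L).
  { unfold L. simpl. unfold Dt, t_alpha, t_beta; simpl.
    repeat split; intros u Hu; repeat destruct Hu as [<-|Hu]; try contradiction; simpl; lra. }
  apply (FIN5 h (filter fzf L)).
  - apply fz_REP; auto.
  - apply hon_filter; auto.
  - pose proof (filter_length_le fzf L). unfold L in *; simpl in *; lia.
Qed.

Lemma min_unique : forall p s0, in_B p s0 -> (forall s, in_B p s -> badge_le s0 s) ->
  exists! s, is_signature p s.
Proof.
  intros p s0 H0 Hmin. exists s0. split.
  - split; auto. intros s' Hs' Hle. specialize (Hmin s' Hs').
    destruct s0, s'; unfold badge_le in *; simpl in *. f_equal; lia.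
  - intros s [Hs Hsmin]. apply Hsmin; auto.
Qed.

Lemma inB_iff : forall p s, in_B p s <-> exists l, REP (hom p) l /\ hon l /\ (cntpos l, cntneg l) = s.
Proof.
  intros p s. unfold in_B, is_honest_rep. split.
  - intros [l [[Hr Hh] Hb]]. exists l. apply is_rep_iff in Hr. apply honest_hon in Hh.
    split; [split; destruct Hr; auto|]. split; auto.
  - intros [l [[L M] [Hh Hb]]]. exists l. split; [split|]; auto.
    + apply is_rep_iff; auto.
    + apply honest_hon; auto.
Qed.

Theorem theorem4p1 : forall p : F24, exists! s : nat * nat, is_signature p s.
Proof.
  intros p. set (h := hom p).
  destruct (classic (exists R0, GOOD h R0)) as [[R0 G]|NG].
  - apply (min_unique p (cntpos R0, cntneg R0)).
    + apply inB_iff. exists R0. destruct G as [Hr [Hh _]]. auto.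
    + intros s Hs. apply inB_iff in Hs. destruct Hs as [l [Hr [Hh <-]]].
      unfold badge_le; simpl. split; [apply (C1pos h R0 l)|apply (C1neg h R0 l)]; auto.
  - destruct (Main h) as [G|[l [Hr [Hh [Cp Cn]]]]]; [contradiction|].
    apply (min_unique p (2%nat, 2%nat)).
    + apply inB_iff. exists l. rewrite Cp, Cn. auto.
    + intros s Hs. apply inB_iff in Hs. destruct Hs as [l' [Hr' [Hh' <-]]].
      unfold badge_le; simpl. split.
      * destruct (le_lt_dec 2 (cntpos l')) as [ok|bad]; auto.
        exfalso. apply NG. apply (C3 h l'); auto. lia.
      * destruct (le_lt_dec 2 (cntneg l')) as [ok|bad]; auto.
        exfalso. apply NG. apply (C3n h l'); auto. lia.
Qed.
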